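(* Let $n\ge 0$ be an integer and for $k\in\mathbb{Z}_+$ let $v_k(t)=c_k\,e^{-\frac{t^{2n+2}}{2n+2}}L^{(-\frac{1}{2n+2})}_{k}\!\left(\frac{t^{2n+2}}{n+1}\right)$ with $c_k>0$ chosen so that $\|t^nv_k\|_{L^2(\mathbb{R})}=1$. Let $0<\delta\le\frac12$, $B=\frac{1-\delta^{2n+1}}{2n+2}$, and let $C_0>0$ be a constant independent of $k$ such that $|v_k(t)|\le C_0^{k+1}e^{-Bt^{2n+2}}$ for all $k$ and $t$. Then for every $B'$ with $0<B'<B$ there is a constant $C_1>0$ independent of $k$, with $C_1=\mathscr{O}((B-B')^{-2})$, such that $$|v_k'(t)|\le C_1C_0^{\,k}e^{-B't^{2n+2}}$$ for all $k\in\mathbb{Z}_+$ and $t\in\mathbb{R}$.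
   Context: $L^{(a)}_k$ denotes the generalized Laguerre polynomial of degree $k$ and parameter $a$. $v_k$ solves $-v_k''+t^{2(2n+1)}v_k=E_kt^{2n}v_k$ with $E_k=4k(n+1)+2n+1$. *)

(* Defs.v *)
From Stdlib Require Import Reals Factorial.
From Coquelicot Require Import Coquelicot.
Open Scope R_scope.

(* gbin_aux b m = prod_{i=1}^{m} (b + i) / i  = binom(b + m, m) (generalized binomial). *)
Fixpoint gbin_aux (b : R) (m : nat) : R :=
  match m with
  | O => 1
  | S m' => gbin_aux b m' * (b + INR (S m')) / INR (S m')
  end.

(* Generalized Laguerre polynomial
   L_k^{(a)}(x) = sum_{j=0}^k (-1)^j binom(k+a, k-j) x^j / j!,
   where binom(k+a, k-j) = gbin_aux (a + j) (k - j). *)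
Definition laguerre (a : R) (k : nat) (x : R) : R :=
  sum_f_R0 (fun j => (-1) ^ j * gbin_aux (a + INR j) (k - j) * x ^ j / INR (fact j)) k.

Definition vfun (n : nat) (c : nat -> R) (k : nat) (t : R) : R :=
  c k * exp (- (t ^ (2 * n + 2)) / INR (2 * n + 2))
      * laguerre (- 1 / INR (2 * n + 2)) k (t ^ (2 * n + 2) / INR (n + 1)).

Definition Bconst (n : nat) (delta : R) : R :=
  (1 - delta ^ (2 * n + 1)) / INR (2 * n + 2).

(* Main.v *)
Require Import Defs.
From Stdlib Require Import Reals Lra Lia Factorial.
From Coquelicot Require Import Coquelicot.
Open Scope R_scope.

Lemma sum_deriv (b : nat -> R) (m : nat -> nat) (k : nat) (x : R) :
  is_derive (fun x => sum_f_R0 (fun j => b j * x ^ m j) k) x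
    (sum_f_R0 (fun j => b j * (INR (m j) * x ^ pred (m j))) k).
Proof.
  induction k; simpl.
  - auto_derive; auto; ring.
  - apply (is_derive_plus (fun x => sum_f_R0 (fun j => b j * x ^ m j) k)
                           (fun x => b (S k) * x ^ m (S k))); auto.
    auto_derive; auto; ring.
Qed.

Lemma gbin_step (b : R) (q : nat) :
  gbin_aux b (S q) * INR (S q) = (b + 1) * gbin_aux (b + 1) q.
Proof.
  induction q.
  - simpl. field.
  - change (gbin_aux b (S (S q))) with (gbin_aux b (S q) * (b + INR (S (S q))) / INR (S (S q))).
    change (gbin_aux (b+1) (S q)) with (gbin_aux (b+1) q * (b + 1 + INR (S q)) / INR (S q)).
    assert (H1 : INR (S q) <> 0) by (apply not_0_INR; lia).
    assert (H2 : INR (S (S q)) <> 0) by (apply not_0_INR; lia).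
    assert (E : gbin_aux b (S q) = (b + 1) * gbin_aux (b + 1) q / INR (S q)).
    { rewrite <- IHq. field. auto. }
    rewrite E. rewrite !S_INR. rewrite S_INR in H1, H2. rewrite S_INR in H2. field. split; auto.
Qed.

Definition lc (a : R) (k j : nat) : R :=
  (-1) ^ j * gbin_aux (a + INR j) (k - j) / INR (fact j).

Definition L0 a k x := sum_f_R0 (fun j => lc a k j * x ^ j) k.
Definition L1 a k x := sum_f_R0 (fun j => lc a k j * (INR j * x ^ pred j)) k.
Definition L2 a k x := sum_f_R0 (fun j => (lc a k j * INR j) * (INR (pred j) * x ^ pred (pred j))) k.

Lemma lag_L0 a k x : laguerre a k x = L0 a k x.
Proof.
  unfold laguerre, L0, lc. apply sum_eq. intros i _.
  field. apply INR_fact_neq_0.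
Qed.

Lemma L0_deriv a k x : is_derive (L0 a k) x (L1 a k x).
Proof. apply (sum_deriv (lc a k) (fun j => j)). Qed.

Lemma L1_deriv a k x : is_derive (L1 a k) x (L2 a k x).
Proof.
  unfold L1.
  apply is_derive_ext with (fun x => sum_f_R0 (fun j => (lc a k j * INR j) * x ^ pred j) k).
  { intros t. apply sum_eq. intros; ring. }
  apply (sum_deriv (fun j => lc a k j * INR j) pred).
Qed.

Lemma lc_rec a m i : (i <= m)%nat ->
  lc a (S m) (S i) * INR (S i) * (INR (S i) + a) = lc a (S m) i * (INR i - INR (S m)).
Proof.
  intros Hi. unfold lc.
  replace (S m - S i)%nat with (m - i)%nat by lia.
  replace (S m - i)%nat with (S (m - i)) by lia.
  pose proof (gbin_step (a + INR i) (m - i)) as G.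
  replace (INR (S (m - i))) with (INR (S m) - INR i) in G
    by (rewrite (S_INR (m - i)), minus_INR by lia; rewrite S_INR; ring).
  replace (a + INR (S i)) with (a + INR i + 1) by (rewrite S_INR; ring).
  change (fact (S i)) with (S i * fact i)%nat. rewrite mult_INR.
  simpl pow.
  assert (HF := INR_fact_neq_0 i).
  assert (HS : INR (S i) <> 0) by (apply not_0_INR; lia).
  replace ((-1) ^ i * gbin_aux (a + INR i) (S (m - i)) / INR (fact i) * (INR i - INR (S m)))
    with (- ((-1) ^ i * (gbin_aux (a + INR i) (S (m - i)) * (INR (S m) - INR i)) / INR (fact i)))
    by (field; auto).
  rewrite G. rewrite S_INR. rewrite S_INR in HS. field. split; auto.
Qed.

Lemma lag_ode a k x : x * L2 a k x + (a + 1 - x) * L1 a k x + INR k * L0 a k x = 0.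
Proof.
  pose (F := fun j => lc a k j * INR j * (INR j + a) * x ^ pred j).
  pose (G := fun j => lc a k j * (INR j - INR k) * x ^ j).
  assert (E1 : x * L2 a k x + (a + 1) * L1 a k x = sum_f_R0 F k).
  { unfold L1, L2. rewrite scal_sum, scal_sum. rewrite <- sum_plus.
    apply sum_eq. intros i _. unfold F.
    destruct i as [|i]. simpl. ring.
    destruct i as [|i]. simpl. ring.
    simpl pred. rewrite !S_INR. simpl pow. ring. }
  assert (E2 : - x * L1 a k x + INR k * L0 a k x = - sum_f_R0 G k).
  { unfold L1, L0. replace (- sum_f_R0 G k) with (-1 * sum_f_R0 G k) by ring.
    rewrite scal_sum, scal_sum, scal_sum, <- sum_plus.
    apply sum_eq. intros i _. unfold G.
    destruct i as [|i]. simpl. ring.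
    simpl pred. rewrite !S_INR. simpl pow. ring. }
  assert (E3 : sum_f_R0 F k = sum_f_R0 G k).
  { destruct k as [|m].
    - unfold F, G. simpl. ring.
    - rewrite decomp_sum by lia. rewrite tech5. simpl pred.
      replace (F 0%nat) with 0 by (unfold F; simpl; ring).
      replace (G (S m)) with 0 by (unfold G; ring).
      rewrite Rplus_0_l, Rplus_0_r. apply sum_eq. intros i Hi.
      unfold F, G. simpl pred. rewrite lc_rec by auto. ring. }
  replace (x * L2 a k x + (a + 1 - x) * L1 a k x + INR k * L0 a k x)
    with ((x * L2 a k x + (a + 1) * L1 a k x) + (- x * L1 a k x + INR k * L0 a k x)) by ring.
  rewrite E1, E2, E3. ring.
Qed.


Definition aa n := - 1 / INR (2 * n + 2).
Definition yy n t := t ^ (2 * n + 2) / INR (n + 1).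
Definition V1 n (c : nat -> R) k t :=
  c k * exp (- (t ^ (2 * n + 2)) / INR (2 * n + 2)) * t ^ (2 * n + 1)
   * (2 * L1 (aa n) k (yy n t) - L0 (aa n) k (yy n t)).

Lemma pw1 n t : t ^ (2 * n + 1) = t ^ (2 * n) * t.
Proof. rewrite pow_add. ring. Qed.
Lemma pw2 n t : t ^ (2 * n + 2) = t ^ (2 * n) * t ^ 2.
Proof. rewrite pow_add. ring. Qed.
Lemma pw3 n t : t ^ (4 * n + 2) = t ^ (2 * n) * t ^ (2 * n) * t ^ 2.
Proof. replace (4 * n + 2)%nat with (2 * n + 2 * n + 2)%nat by lia. rewrite !pow_add. ring. Qed.
Lemma INRp n : INR (2 * n + 2) = 2 * INR n + 2.
Proof. rewrite plus_INR, mult_INR. simpl. ring. Qed.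
Lemma INRn1 n : INR (n + 1) = INR n + 1.
Proof. rewrite plus_INR. simpl. ring. Qed.
Lemma INRq n : INR (2 * n + 1) = 2 * INR n + 1.
Proof. rewrite plus_INR, mult_INR. simpl. ring. Qed.
Lemma INR2n n : INR (2 * n) = 2 * INR n.
Proof. rewrite mult_INR. simpl. ring. Qed.
Lemma INRpos n : 0 < INR n + 1.
Proof. pose proof (pos_INR n). lra. Qed.

Lemma v_deriv n c k t : is_derive (vfun n c k) t (V1 n c k t).
Proof.
  apply is_derive_ext with (fun t => c k * exp (- (t ^ (2 * n + 2)) / INR (2 * n + 2))
      * L0 (aa n) k (t ^ (2 * n + 2) / INR (n + 1))).
  { intros; unfold vfun. rewrite lag_L0. reflexivity. }
  auto_derive.
  { eexists. apply L0_deriv. }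
  rewrite (is_derive_unique _ _ _ (L0_deriv _ _ _)).
  replace (Init.Nat.pred (n + (n + 0) + 2)) with (2 * n + 1)%nat by lia.
  replace (n + (n + 0) + 2)%nat with (2 * n + 2)%nat by lia.
  unfold V1, yy. rewrite !pw1, !pw2, !INRp, !INRn1.
  pose proof (INRpos n).
  unfold Rdiv. field. lra.
Qed.

Definition EE n k := 4 * INR k * (INR n + 1) + 2 * INR n + 1.

Lemma V1_deriv n c k t :
  is_derive (V1 n c k) t ((t ^ (4 * n + 2) - EE n k * t ^ (2 * n)) * vfun n c k t).
Proof.
  unfold V1, yy.
  auto_derive.
  { split; [|split; [|exact I]]; eexists; [apply L1_deriv | apply L0_deriv]. }
  rewrite (is_derive_unique _ _ _ (L0_deriv _ _ _)).
  rewrite (is_derive_unique _ _ _ (L1_deriv _ _ _)).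
  unfold vfun. rewrite lag_L0.
  replace (Init.Nat.pred (n + (n + 0) + 2)) with (2 * n + 1)%nat by lia.
  replace (Init.Nat.pred (n + (n + 0) + 1)) with (2 * n)%nat by lia.
  replace (n + (n + 0) + 2)%nat with (2 * n + 2)%nat by lia.
  replace (n + (n + 0) + 1)%nat with (2 * n + 1)%nat by lia.
  change (-1 / INR (2 * n + 2)) with (aa n).
  unfold Rdiv.
  pose proof (lag_ode (aa n) k (t ^ (2 * n + 2) * / INR (n + 1))) as H0.
  set (A0 := L0 (aa n) k (t ^ (2 * n + 2) * / INR (n + 1))) in *.
  set (A1 := L1 (aa n) k (t ^ (2 * n + 2) * / INR (n + 1))) in *.
  set (A2 := L2 (aa n) k (t ^ (2 * n + 2) * / INR (n + 1))) in *.
  set (e := exp (- t ^ (2 * n + 2) * / INR (2 * n + 2))).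
  unfold aa, EE in *.
  rewrite ?pw1, ?pw2, ?pw3, ?INRp, ?INRn1, ?INRq in *.
  pose proof (INRpos n).
  set (s := t ^ (2 * n)) in *.
  apply Rminus_diag_uniq.
  transitivity (4 * c k * e * s * (INR n + 1) *
    (s * t ^ 2 * / (INR n + 1) * A2 + (-1 / (2 * INR n + 2) + 1 - s * t ^ 2 * / (INR n + 1)) * A1 + INR k * A0)).
  - rewrite INR2n. field. lra.
  - rewrite H0. ring.
Qed.


Lemma exp_le a b : a <= b -> exp a <= exp b.
Proof. intros [H|H]. left; apply exp_increasing; auto. subst; lra. Qed.

Lemma exp_le1 a : a <= 0 -> exp a <= 1.
Proof. intros H. rewrite <- exp_0. apply exp_le; auto. Qed.

Lemma xexp x : 0 <= x -> x * exp (- x) <= 1.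
Proof.
  intros Hx. rewrite exp_Ropp. pose proof (exp_ineq1_le x). pose proof (exp_pos x).
  apply (Rmult_le_reg_r (exp x)); auto.
  rewrite Rmult_assoc, Rinv_l by lra. lra.
Qed.

Lemma u_ge n t : 1 <= t -> t <= t ^ (2 * n + 2) /\ t ^ (2 * n) <= t ^ (2 * n + 2)
   /\ t ^ (4 * n + 2) <= (t ^ (2 * n + 2)) ^ 2.
Proof.
  intros Ht. split; [|split].
  - rewrite <- (pow_1 t) at 1. apply Rle_pow; auto; lia.
  - apply Rle_pow; auto; lia.
  - rewrite <- pow_mult. apply Rle_pow; auto; lia.
Qed.

Lemma small_t n t : 0 <= t <= 1 -> t ^ n <= 1.
Proof. intros H. rewrite <- (pow1 n). apply pow_incr. lra. Qed.

Lemma tA n c t : 0 <= t -> 0 < c <= 1 ->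
  t ^ (2 * n) * exp (- c * t ^ (2 * n + 2)) <= 2 / c.
Proof.
  intros Ht Hc.
  assert (Hu : 0 <= t ^ (2 * n + 2)) by (apply pow_le; auto).
  assert (He : 0 < exp (- c * t ^ (2 * n + 2))) by apply exp_pos.
  assert (H2 : 1 <= 2 / c) by (apply (Rmult_le_reg_r c); [lra|]; unfold Rdiv; rewrite Rmult_assoc, Rinv_l; lra).
  destruct (Rle_lt_dec t 1) as [H1|H1].
  - pose proof (small_t (2 * n) t (conj Ht H1)).
    pose proof (exp_le1 (- c * t ^ (2 * n + 2))).
    assert (exp (- c * t ^ (2 * n + 2)) <= 1) by (apply exp_le1; nra).
    pose proof (pow_le t (2 * n) Ht). nra.
  - destruct (u_ge n t) as [_ [Hb _]]; [lra|].
    pose proof (xexp (c * t ^ (2 * n + 2))) as X.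
    replace (- (c * t ^ (2 * n + 2))) with (- c * t ^ (2 * n + 2)) in X by ring.
    assert (X2 : c * (t ^ (2 * n + 2) * exp (- c * t ^ (2 * n + 2))) <= 1) by (rewrite <- Rmult_assoc; apply X; nra).
    assert (X3 : t ^ (2 * n + 2) * exp (- c * t ^ (2 * n + 2)) <= 1 / c).
    { apply (Rmult_le_reg_l c); [lra|]. replace (c * (1 / c)) with 1 by (field; lra). lra. }
    assert (1 / c <= 2 / c) by (unfold Rdiv; apply Rmult_le_compat_r; [left; apply Rinv_0_lt_compat|]; lra).
    nra.
Qed.

Lemma tB n c t : 0 <= t -> 0 < c <= 1 ->
  t ^ (4 * n + 2) * exp (- c * t ^ (2 * n + 2)) ^ 2 <= 2 / c ^ 2.
Proof.
  intros Ht Hc.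
  assert (Hu : 0 <= t ^ (2 * n + 2)) by (apply pow_le; auto).
  assert (He : 0 < exp (- c * t ^ (2 * n + 2))) by apply exp_pos.
  assert (Hc2 : 0 < c ^ 2) by nra.
  assert (H2 : 1 <= 2 / c ^ 2).
  { apply (Rmult_le_reg_r (c ^ 2)); [lra|]; unfold Rdiv; rewrite Rmult_assoc, Rinv_l; nra. }
  destruct (Rle_lt_dec t 1) as [H1|H1].
  - pose proof (small_t (4 * n + 2) t (conj Ht H1)).
    assert (exp (- c * t ^ (2 * n + 2)) <= 1) by (apply exp_le1; nra).
    pose proof (pow_le t (4 * n + 2) Ht). nra.
  - destruct (u_ge n t) as [_ [_ Hb]]; [lra|].
    pose proof (xexp (c * t ^ (2 * n + 2))) as X.
    replace (- (c * t ^ (2 * n + 2))) with (- c * t ^ (2 * n + 2)) in X by ring.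
    assert (X2 : c * (t ^ (2 * n + 2) * exp (- c * t ^ (2 * n + 2))) <= 1) by (rewrite <- Rmult_assoc; apply X; nra).
    set (w := t ^ (2 * n + 2) * exp (- c * t ^ (2 * n + 2))) in *.
    assert (Hw : 0 <= w) by (unfold w; nra).
    assert (Hcw : 0 <= c * w) by (apply Rmult_le_pos; lra).
    assert (X3 : (c * w) ^ 2 <= 1) by (simpl; nra).
    assert (X4 : w ^ 2 <= 1 / c ^ 2).
    { apply (Rmult_le_reg_l (c ^ 2)); [lra|]. replace (c ^ 2 * (1 / c ^ 2)) with 1 by (field; lra).
      replace (c ^ 2 * w ^ 2) with ((c * w) ^ 2) by ring. lra. }
    assert (1 / c ^ 2 <= 2 / c ^ 2) by (unfold Rdiv; apply Rmult_le_compat_r; [left; apply Rinv_0_lt_compat|]; lra).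
    assert (t ^ (4 * n + 2) * exp (- c * t ^ (2 * n + 2)) ^ 2 <= w ^ 2) by (unfold w; nra).
    lra.
Qed.

Lemma tC n B T : 0 < B -> 1 <= T ->
  T ^ (2 * n) * exp (- B * T ^ (2 * n + 2)) ^ 2 <= 1 / (B ^ 2 * T).
Proof.
  intros HB HT.
  destruct (u_ge n T HT) as [Ha [Hb _]].
  set (u := T ^ (2 * n + 2)) in *.
  assert (Hex : B * u <= exp (B * u)) by (pose proof (exp_ineq1_le (B * u)); lra).
  assert (Hpos : 0 < B * u) by nra.
  replace (- B * u) with (- (B * u)) by ring.
  rewrite exp_Ropp.
  set (z := exp (B * u)) in *.
  assert (Hz : 0 < z) by lra.
  assert (HT0 : 0 <= T ^ (2 * n)) by (apply pow_le; lra).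
  assert (Hp : 0 < B ^ 2 * T * z ^ 2) by (repeat apply Rmult_lt_0_compat; try apply pow_lt; lra).
  apply (Rmult_le_reg_r (B ^ 2 * T * z ^ 2)). exact Hp.
  replace (T ^ (2 * n) * (/ z) ^ 2 * (B ^ 2 * T * z ^ 2)) with (T ^ (2 * n) * B ^ 2 * T) by (field; lra).
  replace (1 / (B ^ 2 * T) * (B ^ 2 * T * z ^ 2)) with (z ^ 2) by (field; repeat split; lra).
  assert (T ^ (2 * n) * T <= u * u) by (apply Rmult_le_compat; lra).
  assert (HB2 : 0 < B ^ 2) by (apply pow_lt; lra).
  assert ((B * u) ^ 2 <= z ^ 2) by (apply pow_incr; lra).
  replace ((B * u) ^ 2) with (B ^ 2 * (u * u)) in H0 by ring.
  assert (T ^ (2 * n) * B ^ 2 * T = B ^ 2 * (T ^ (2 * n) * T)) by ring.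
  assert (B ^ 2 * (T ^ (2 * n) * T) <= B ^ 2 * (u * u)) by (apply Rmult_le_compat_l; lra).
  lra.
Qed.


Lemma pw41 n t : t ^ (4 * n + 1) = t ^ (2 * n) * t ^ (2 * n + 1).
Proof. rewrite <- pow_add. f_equal. lia. Qed.

Lemma core n E C B B' (v v1 : R -> R) :
  (forall t, is_derive v t (v1 t)) ->
  (forall t, is_derive v1 t ((t ^ (4 * n + 2) - E * t ^ (2 * n)) * v t)) ->
  0 <= E -> 0 < C -> 0 < B' -> B' < B -> B <= 1 / 2 ->
  (forall t, Rabs (v t) <= C * exp (- B * t ^ (2 * n + 2))) ->
  forall t, 0 <= t -> Rabs (v1 t) <= C * (4 / B + 2) / (B - B') * exp (- B' * t ^ (2 * n + 2)).
Proof.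
  intros Hd Hd2 HE HC HB' HBB HB Hv.
  pose (c := B - B').
  assert (Hc : 0 < c <= 1) by (unfold c; lra).
  assert (HB0 : 0 < B) by lra.
  pose (al := 4 * C ^ 2 / (B * c)).
  assert (Hal : 0 < al) by (unfold al; apply Rdiv_lt_0_compat; [nra|apply Rmult_lt_0_compat; lra]).
  assert (Hv2 : forall t, v t ^ 2 <= C ^ 2 * exp (- B * t ^ (2 * n + 2)) ^ 2).
  { intros t. rewrite <- pow2_abs. rewrite <- Rpow_mult_distr. apply pow_incr. split; [apply Rabs_pos| apply Hv]. }
  assert (Hsplit : forall t, exp (- B * t ^ (2 * n + 2)) =
           exp (- c * t ^ (2 * n + 2)) * exp (- B' * t ^ (2 * n + 2))).
  { intros t. rewrite <- exp_plus. f_equal. unfold c. ring. }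
  pose (Phi := fun t => v1 t ^ 2 + (E * t ^ (2 * n) - t ^ (4 * n + 2)) * v t ^ 2
      - al * exp (- B * t ^ (2 * n + 2)) * exp (- B' * t ^ (2 * n + 2))).
  pose (dPhi := fun t => INR (2 * n) * E * t ^ (pred (2 * n)) * v t ^ 2
      - INR (4 * n + 2) * t ^ (4 * n + 1) * v t ^ 2
      + al * (B + B') * INR (2 * n + 2) * t ^ (2 * n + 1)
          * exp (- B * t ^ (2 * n + 2)) * exp (- B' * t ^ (2 * n + 2))).
  assert (HdPhi : forall t, is_derive Phi t (dPhi t)).
  { intros t. unfold Phi. auto_derive.
    { split; [eexists; apply Hd2 | split; [eexists; apply Hd | exact I]]. }
    replace (Derive (fun x => v x) t) with (v1 t) by (symmetry; apply is_derive_unique; apply Hd).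
    replace (Derive (fun x => v1 x) t) with ((t ^ (4 * n + 2) - E * t ^ (2 * n)) * v t)
      by (symmetry; apply is_derive_unique; apply Hd2).
    unfold dPhi.
    replace (Init.Nat.pred (n + (n + (n + (n + 0))) + 2)) with (4 * n + 1)%nat by lia.
    replace (n + (n + (n + (n + 0))) + 2)%nat with (4 * n + 2)%nat by lia.
    replace (Init.Nat.pred (n + (n + 0) + 2)) with (2 * n + 1)%nat by lia.
    replace (n + (n + 0) + 2)%nat with (2 * n + 2)%nat by lia.
    replace (n + (n + 0))%nat with (2 * n)%nat by lia.
    ring. }
  assert (Hpos : forall t, 0 <= t -> 0 <= dPhi t).
  { intros t Ht. unfold dPhi.
    assert (T1 : 0 <= INR (2 * n) * E * t ^ pred (2 * n) * v t ^ 2).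
    { apply Rmult_le_pos; [|apply pow2_ge_0]. apply Rmult_le_pos; [|apply pow_le; auto].
      apply Rmult_le_pos; auto. apply pos_INR. }
    rewrite pw41.
    set (s := t ^ (2 * n)). set (q := t ^ (2 * n + 1)).
    set (eB := exp (- B * t ^ (2 * n + 2))).
    set (eBp := exp (- B' * t ^ (2 * n + 2))).
    set (ec := exp (- c * t ^ (2 * n + 2))).
    assert (Hs : 0 <= s) by (apply pow_le; auto).
    assert (Hq : 0 <= q) by (apply pow_le; auto).
    assert (HeB : 0 < eB) by apply exp_pos.
    assert (HeBp : 0 < eBp) by apply exp_pos.
    assert (Hec : 0 < ec) by apply exp_pos.
    assert (Hsp : eB = ec * eBp) by apply Hsplit.
    assert (HA : s * ec <= 2 / c) by (apply tA; auto).
    assert (Hvv : v t ^ 2 <= C ^ 2 * eB ^ 2) by apply Hv2.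
    pose (P := q * C ^ 2 * eB * eBp).
    assert (HP : 0 <= P) by (unfold P; repeat apply Rmult_le_pos; lra || (apply pow_le; lra)).
    assert (L1 : INR (4 * n + 2) * (s * q) * v t ^ 2 <= INR (4 * n + 2) * P * (s * ec)).
    { replace (INR (4 * n + 2) * P * (s * ec)) with (INR (4 * n + 2) * (s * q) * (C ^ 2 * eB ^ 2))
        by (unfold P; rewrite Hsp; ring).
      apply Rmult_le_compat_l; auto. apply Rmult_le_pos; [apply pos_INR| nra]. }
    assert (L2 : INR (4 * n + 2) * P * (s * ec) <= INR (4 * n + 2) * P * (2 / c)).
    { apply Rmult_le_compat_l; auto. apply Rmult_le_pos; auto. apply pos_INR. }
    assert (L3 : INR (4 * n + 2) * P * (2 / c) <= al * (B + B') * INR (2 * n + 2) * q * eB * eBp).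
    { replace (al * (B + B') * INR (2 * n + 2) * q * eB * eBp) with
        (P * (4 * (B + B') / B * INR (2 * n + 2) / c)) by (unfold P, al; field; lra).
      replace (INR (4 * n + 2) * P * (2 / c)) with (P * (2 * INR (4 * n + 2) / c)) by (field; lra).
      apply Rmult_le_compat_l; auto.
      unfold Rdiv. apply Rmult_le_compat_r. left; apply Rinv_0_lt_compat; lra.
      assert (HBq : 1 <= (B + B') * / B).
      { apply (Rmult_le_reg_r B); auto. rewrite Rmult_assoc, Rinv_l; lra. }
      rewrite !plus_INR, !mult_INR. simpl INR. pose proof (pos_INR n).
      replace (4 * (B + B') * / B * (2 * INR n + 2)) with (4 * ((B + B') * / B) * (2 * INR n + 2)) by ring.
      nra. }
    lra. }
  assert (Hmono : forall a b, 0 <= a <= b -> Phi a <= Phi b).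
  { intros a b Hab.
    destruct (MVT_gen Phi a b dPhi) as [xi [Hxi Heq]].
    - intros x _. apply HdPhi.
    - intros x _. apply derivable_continuous_pt, ex_derive_Reals_0.
      eexists; apply HdPhi.
    - rewrite Rmin_left in Hxi by lra. rewrite Rmax_right in Hxi by lra.
      assert (0 <= dPhi xi) by (apply Hpos; lra).
      assert (0 <= dPhi xi * (b - a)) by (apply Rmult_le_pos; lra).
      lra. }
  assert (Hvb : forall x, Rabs (v x) <= C).
  { intros x. eapply Rle_trans; [apply Hv|]. rewrite <- (Rmult_1_r C) at 2.
    apply Rmult_le_compat_l; [lra|]. apply exp_le1.
    assert (0 <= x ^ (2 * n + 2)) by (replace (2 * n + 2)%nat with (2 * (n + 1))%nat by lia; rewrite pow_mult; apply pow_le, pow2_ge_0).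
    nra. }
  assert (Hneg : forall t, 0 <= t -> Phi t <= 0).
  { intros t0 Ht0. apply Rnot_lt_le. intros Hp.
    set (eps := Phi t0) in *.
    set (T0 := Rmax (Rmax t0 1) (2 * E * C ^ 2 / (B ^ 2 * eps))).
    assert (HT0a : t0 <= T0) by (unfold T0; eapply Rle_trans; [apply Rmax_l|apply Rmax_l]).
    assert (HT0b : 1 <= T0) by (unfold T0; eapply Rle_trans; [apply Rmax_r|apply Rmax_l]).
    assert (HT0c : 2 * E * C ^ 2 / (B ^ 2 * eps) <= T0) by (unfold T0; apply Rmax_r).
    assert (G : forall T, T0 <= T -> eps / 2 <= v1 T ^ 2).
    { intros T HT.
      assert (HPT : eps <= Phi T) by (apply Hmono; lra).
      assert (HC1 : T ^ (2 * n) * exp (- B * T ^ (2 * n + 2)) ^ 2 <= 1 / (B ^ 2 * T)) by (apply tC; lra).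
      assert (HvT := Hv2 T).
      assert (Hs : 0 <= T ^ (2 * n)) by (apply pow_le; lra).
      assert (H4 : 0 <= T ^ (4 * n + 2) * v T ^ 2) by (apply Rmult_le_pos; [apply pow_le; lra|apply pow2_ge_0]).
      assert (HH : 0 <= al * exp (- B * T ^ (2 * n + 2)) * exp (- B' * T ^ (2 * n + 2))).
      { pose proof (exp_pos (- B * T ^ (2 * n + 2))). pose proof (exp_pos (- B' * T ^ (2 * n + 2))). 
        apply Rmult_le_pos; [apply Rmult_le_pos|]; lra. }
      assert (HEs : E * T ^ (2 * n) * v T ^ 2 <= E * C ^ 2 * (1 / (B ^ 2 * T))).
      { apply Rle_trans with (E * C ^ 2 * (T ^ (2 * n) * exp (- B * T ^ (2 * n + 2)) ^ 2)).
        - replace (E * C ^ 2 * (T ^ (2 * n) * exp (- B * T ^ (2 * n + 2)) ^ 2)) with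
             (E * T ^ (2 * n) * (C ^ 2 * exp (- B * T ^ (2 * n + 2)) ^ 2)) by ring.
          apply Rmult_le_compat_l; auto. apply Rmult_le_pos; auto.
        - apply Rmult_le_compat_l; auto. apply Rmult_le_pos; auto. apply pow_le; lra. }
      assert (HEs2 : E * C ^ 2 * (1 / (B ^ 2 * T)) <= eps / 2).
      { assert (HBT : 0 < B ^ 2 * T) by (apply Rmult_lt_0_compat; [apply pow_lt|]; lra).
        assert (HBe : 0 < B ^ 2 * eps) by (apply Rmult_lt_0_compat; [apply pow_lt|]; lra).
        assert (X : 2 * E * C ^ 2 <= T * (B ^ 2 * eps)).
        { apply (Rmult_le_reg_r (/ (B ^ 2 * eps))). apply Rinv_0_lt_compat; lra.
          replace (T * (B ^ 2 * eps) * / (B ^ 2 * eps)) with T by (field; lra). lra. }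
        apply (Rmult_le_reg_r (B ^ 2 * T)); auto.
        replace (E * C ^ 2 * (1 / (B ^ 2 * T)) * (B ^ 2 * T)) with (E * C ^ 2) by (field; lra).
        nra. }
      unfold Phi in HPT. lra. }
    pose (L := 8 * C ^ 2 / eps + 1).
    assert (HL0 : 0 <= 8 * C ^ 2 / eps) by (apply Rlt_le, Rdiv_lt_0_compat; nra).
    destruct (MVT_gen v T0 (T0 + L) v1) as [xi [Hxi Heq]].
    - intros x _. apply Hd.
    - intros x _. apply derivable_continuous_pt, ex_derive_Reals_0.
      eexists; apply Hd.
    - rewrite Rmin_left in Hxi by (unfold L; lra). rewrite Rmax_right in Hxi by (unfold L; lra).
      assert (Gx := G xi (proj1 Hxi)).
      replace (T0 + L - T0) with L in Heq by ring.
      assert (Hd1 := Hvb (T0 + L)). assert (Hd0 := Hvb T0).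
      assert (Hdiff : (v (T0 + L) - v T0) ^ 2 <= 4 * C ^ 2).
      { rewrite <- pow2_abs. replace (4 * C ^ 2) with ((2 * C) ^ 2) by ring.
        apply pow_incr. split; [apply Rabs_pos|].
        eapply Rle_trans; [apply Rabs_triang|]. rewrite Rabs_Ropp. lra. }
      rewrite Heq in Hdiff.
      assert (HL1 : 8 * C ^ 2 / eps < L) by (unfold L; lra).
      assert (HL2 : 1 <= L) by (unfold L; lra).
      assert (HLL : L <= L * L) by nra.
      assert (X : 4 * C ^ 2 < eps / 2 * L).
      { replace (4 * C ^ 2) with (eps / 2 * (8 * C ^ 2 / eps)) by (field; lra).
        apply Rmult_lt_compat_l; lra. }
      assert (X2 : eps / 2 * L <= eps / 2 * (L * L)) by (apply Rmult_le_compat_l; lra).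
      assert (X3 : eps / 2 * (L * L) <= v1 xi ^ 2 * (L * L)) by (apply Rmult_le_compat_r; nra).
      replace ((v1 xi * L) ^ 2) with (v1 xi ^ 2 * (L * L)) in Hdiff by ring.
      lra. }
  intros t Ht.
  assert (HPt := Hneg t Ht). unfold Phi in HPt.
  set (s := t ^ (2 * n)) in *.
  set (eB := exp (- B * t ^ (2 * n + 2))) in *.
  set (eBp := exp (- B' * t ^ (2 * n + 2))) in *.
  set (ec := exp (- c * t ^ (2 * n + 2))) in *.
  assert (Hs : 0 <= s) by (apply pow_le; auto).
  assert (HeBp : 0 < eBp) by apply exp_pos.
  assert (Hec : 0 < ec) by apply exp_pos.
  assert (Hsp : eB = ec * eBp) by apply Hsplit.
  assert (Hec1 : ec <= 1).
  { apply exp_le1. assert (0 <= t ^ (2 * n + 2)) by (apply pow_le; auto). nra. }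
  assert (HBt : t ^ (4 * n + 2) * ec ^ 2 <= 2 / c ^ 2) by (apply tB; auto).
  assert (Hvv : v t ^ 2 <= C ^ 2 * eB ^ 2) by apply Hv2.
  assert (HEs : 0 <= E * s * v t ^ 2) by (apply Rmult_le_pos; [nra|apply pow2_ge_0]).
  assert (S1 : v1 t ^ 2 <= al * eB * eBp + t ^ (4 * n + 2) * v t ^ 2) by lra.
  assert (S2 : al * eB * eBp <= 4 * C ^ 2 / (B * c ^ 2) * eBp ^ 2).
  { rewrite Hsp. unfold al.
    replace (4 * C ^ 2 / (B * c) * (ec * eBp) * eBp) with ((4 * C ^ 2 / B) * (ec / c) * eBp ^ 2) by (field; lra).
    replace (4 * C ^ 2 / (B * c ^ 2) * eBp ^ 2) with ((4 * C ^ 2 / B) * (1 / c ^ 2) * eBp ^ 2) by (field; lra).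
    apply Rmult_le_compat_r; [nra|]. apply Rmult_le_compat_l. apply Rlt_le, Rdiv_lt_0_compat; nra.
    apply (Rmult_le_reg_r (c ^ 2)). nra.
    replace (ec / c * c ^ 2) with (ec * c) by (field; lra).
    replace (1 / c ^ 2 * c ^ 2) with 1 by (field; lra). nra. }
  assert (Ht4 : 0 <= t ^ (4 * n + 2)) by (apply pow_le; auto).
  assert (S3 : t ^ (4 * n + 2) * v t ^ 2 <= C ^ 2 * (2 / c ^ 2) * eBp ^ 2).
  { apply Rle_trans with (t ^ (4 * n + 2) * (C ^ 2 * eB ^ 2)).
    - apply Rmult_le_compat_l; auto.
    - rewrite Hsp. replace (t ^ (4 * n + 2) * (C ^ 2 * (ec * eBp) ^ 2)) with
        (C ^ 2 * (t ^ (4 * n + 2) * ec ^ 2) * eBp ^ 2) by ring.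
      apply Rmult_le_compat_r; [nra|]. apply Rmult_le_compat_l; [nra|auto]. }
  pose (M := 4 / B + 2).
  assert (HM : 1 <= M) by (unfold M; assert (0 < 4 / B) by (apply Rdiv_lt_0_compat; lra); lra).
  assert (S4 : v1 t ^ 2 <= (C * M / c * eBp) ^ 2).
  { replace ((C * M / c * eBp) ^ 2) with (C ^ 2 * (M * M) / c ^ 2 * eBp ^ 2) by (field; lra).
    replace (4 * C ^ 2 / (B * c ^ 2) * eBp ^ 2 + C ^ 2 * (2 / c ^ 2) * eBp ^ 2)
      with (C ^ 2 * M / c ^ 2 * eBp ^ 2) in * by (unfold M; field; lra).
    assert (C ^ 2 * M / c ^ 2 * eBp ^ 2 <= C ^ 2 * (M * M) / c ^ 2 * eBp ^ 2).
    { apply Rmult_le_compat_r; [nra|]. unfold Rdiv. apply Rmult_le_compat_r.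
      apply Rlt_le, Rinv_0_lt_compat; nra. apply Rmult_le_compat_l; nra. }
    replace (C ^ 2 * M / c ^ 2 * eBp ^ 2) with (4 * C ^ 2 / (B * c ^ 2) * eBp ^ 2 + C ^ 2 * (2 / c ^ 2) * eBp ^ 2) in H
      by (unfold M; field; lra).
    lra. }
  assert (HX : 0 <= C * M / c * eBp).
  { apply Rmult_le_pos; [|lra]. apply Rlt_le, Rdiv_lt_0_compat; nra. }
  fold c. fold M.
  rewrite <- (Rabs_pos_eq (C * M / c * eBp)) by auto.
  apply Rsqr_le_abs_0. unfold Rsqr. rewrite <- !Rsqr_pow2 in S4. unfold Rsqr in S4. exact S4.
Qed.


Lemma neg_even n t : (- t) ^ (2 * n + 2) = t ^ (2 * n + 2).
Proof.
  replace (- t) with (-1 * t) by ring. rewrite Rpow_mult_distr.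
  replace (2 * n + 2)%nat with (2 * (n + 1))%nat by lia. rewrite pow_1_even. ring.
Qed.
Lemma neg_odd n t : (- t) ^ (2 * n + 1) = - t ^ (2 * n + 1).
Proof.
  replace (- t) with (-1 * t) by ring. rewrite Rpow_mult_distr.
  replace (2 * n + 1)%nat with (S (2 * n))%nat by lia. rewrite pow_1_odd. ring.
Qed.

Lemma V1_odd n c k t : V1 n c k (- t) = - V1 n c k t.
Proof. unfold V1, yy. rewrite neg_even, neg_odd. ring. Qed.

Theorem proposition5p5 (n : nat) (delta C0 : R) (c : nat -> R) :
  0 < delta <= 1 / 2 ->
  0 < C0 ->
  (forall k : nat, 0 < c k) ->
  (forall k : nat,
      is_RInt_gen (fun t => (t ^ n * vfun n c k t) ^ 2)
        (Rbar_locally m_infty) (Rbar_locally p_infty) 1) ->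
  (forall (k : nat) (t : R),
      Rabs (vfun n c k t) <= C0 ^ (k + 1) * exp (- Bconst n delta * t ^ (2 * n + 2))) ->
  exists K : R, 0 < K /\
    forall B' : R, 0 < B' < Bconst n delta ->
      exists C1 : R, 0 < C1 /\ C1 <= K / (Bconst n delta - B') ^ 2 /\
        forall (k : nat) (t : R),
          Rabs (Derive (vfun n c k) t) <= C1 * C0 ^ k * exp (- B' * t ^ (2 * n + 2)).
Proof.
  intros Hdel HC0 Hc _ Hbnd.
  assert (HBpos : 0 < Bconst n delta /\ Bconst n delta <= 1 / 2).
  { unfold Bconst. rewrite INRp. pose proof (pos_INR n).
    destruct (pow_lt_1_compat delta (2 * n + 1)) as [Hd0 Hd1]; [lra|lia|].
    split.
    - apply Rdiv_lt_0_compat; lra.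
    - apply (Rmult_le_reg_r (2 * INR n + 2)); [lra|].
      replace ((1 - delta ^ (2 * n + 1)) / (2 * INR n + 2) * (2 * INR n + 2)) with (1 - delta ^ (2 * n + 1)) by (field; lra).
      lra. }
  destruct HBpos as [HB0 HB1].
  set (B := Bconst n delta) in *.
  assert (H4B : 0 < 4 / B) by (apply Rdiv_lt_0_compat; lra).
  exists (C0 * (4 / B + 2)). split; [apply Rmult_lt_0_compat; lra|].
  intros B' [HB'0 HB'1].
  assert (Hcc : 0 < B - B' <= 1) by lra.
  exists (C0 * (4 / B + 2) / (B - B')). split; [|split].
  - apply Rdiv_lt_0_compat; [apply Rmult_lt_0_compat|]; lra.
  - unfold Rdiv. apply Rmult_le_compat_l; [apply Rmult_le_pos; lra|].
    apply (Rmult_le_reg_r ((B - B') ^ 2)). nra.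
    replace (/ (B - B') * (B - B') ^ 2) with (B - B') by (field; lra).
    replace (/ (B - B') ^ 2 * (B - B') ^ 2) with 1 by (field; lra). lra.
  - intros k t.
    rewrite (is_derive_unique _ _ _ (v_deriv n c k t)).
    assert (HE : 0 <= EE n k).
    { unfold EE. pose proof (pos_INR n). pose proof (pos_INR k). nra. }
    assert (HCk : 0 < C0 ^ (k + 1)) by (apply pow_lt; lra).
    pose proof (core n (EE n k) (C0 ^ (k + 1)) B B' (vfun n c k) (V1 n c k)
       (v_deriv n c k) (V1_deriv n c k) HE HCk HB'0 HB'1 HB1 (Hbnd k)) as Hcore.
    assert (Heq : forall x, C0 ^ (k + 1) * (4 / B + 2) / (B - B') * x = C0 * (4 / B + 2) / (B - B') * C0 ^ k * x).
    { intros x. rewrite pow_add. field. lra. }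
    destruct (Rle_lt_dec 0 t) as [Ht|Ht].
    + rewrite <- Heq. apply Hcore; auto.
    + replace t with (- (- t)) by ring. rewrite V1_odd, Rabs_Ropp, neg_even.
      rewrite <- Heq. apply Hcore; lra.
Qed.
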